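(* Let $R$ be a ring with identity and $a,b,c,y\in R$. Then: (i) $y$ is both a right $(b,c)$-inverse and a right annihilator $(b,c)$-inverse of $a$ if and only if $y$ is the hybrid $(b,c)$-inverse of $a$, i.e. $yay=y$, $yR=bR$ and $y^\circ=c^\circ$; (ii) $y$ is both a left $(b,c)$-inverse and a left annihilator $(b,c)$-inverse of $a$ if and only if $yay=y$, ${}^\circ b={}^\circ y$ and $Rc=Ry$.
   Context: For $x\in R$: $xR=\{xr:r\in R\}$, $Rx=\{rx:r\in R\}$, $x^\circ=\{r: xr=0\}$, ${}^\circ x=\{r: rx=0\}$. $y$ is a left $(b,c)$-inverse of $a$ if $Ry\subseteq Rc$ and $yab=b$; a right $(b,c)$-inverse if $yR\subseteq bR$ and $cay=c$; a right annihilator $(b,c)$-inverse if $c^\circ\subseteq y^\circ$ and $yab=b$; a left annihilator $(b,c)$-inverse if ${}^\circ b\subseteq {}^\circ y$ and $cay=c$. *)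

(* Defs.v *)
From HB Require Import structures.
From mathcomp Require Import all_boot all_algebra.
Set Implicit Arguments. Unset Strict Implicit. Unset Printing Implicit Defensive.
Import GRing.Theory.
Local Open Scope ring_scope.

Definition subsetR {R : pzRingType} (A B : R -> Prop) : Prop := forall t, A t -> B t.
Definition eqsetR {R : pzRingType} (A B : R -> Prop) : Prop := forall t, A t <-> B t.

(* xR, Rx, x^o (right annihilator), ^o x (left annihilator) *)
Definition rmulset {R : pzRingType} (x : R) : R -> Prop := fun t => exists r, t = x * r.
Definition lmulset {R : pzRingType} (x : R) : R -> Prop := fun t => exists r, t = r * x.
Definition rann {R : pzRingType} (x : R) : R -> Prop := fun r => x * r = 0.
Definition lann {R : pzRingType} (x : R) : R -> Prop := fun r => r * x = 0.

Definition left_bc_inverse {R : pzRingType} (a b c y : R) : Prop :=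
  subsetR (lmulset y) (lmulset c) /\ y * a * b = b.
Definition right_bc_inverse {R : pzRingType} (a b c y : R) : Prop :=
  subsetR (rmulset y) (rmulset b) /\ c * a * y = c.
Definition right_ann_bc_inverse {R : pzRingType} (a b c y : R) : Prop :=
  subsetR (rann c) (rann y) /\ y * a * b = b.
Definition left_ann_bc_inverse {R : pzRingType} (a b c y : R) : Prop :=
  subsetR (lann b) (lann y) /\ c * a * y = c.

Definition hybrid_bc_inverse {R : pzRingType} (a b c y : R) : Prop :=
  y * a * y = y /\ eqsetR (rmulset y) (rmulset b) /\ eqsetR (rann y) (rann c).

(* Main.v *)
Require Import Defs.
From HB Require Import structures.
From mathcomp Require Import all_boot all_algebra.
Import GRing.Theory.
Local Open Scope ring_scope.

Theorem theorem2p10 (R : pzRingType) (a b c y : R) :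
  ((right_bc_inverse a b c y /\ right_ann_bc_inverse a b c y) <->
     hybrid_bc_inverse a b c y) /\
  ((left_bc_inverse a b c y /\ left_ann_bc_inverse a b c y) <->
     (y * a * y = y /\ eqsetR (lann b) (lann y) /\ eqsetR (lmulset c) (lmulset y))).
Proof.
rewrite /right_bc_inverse /right_ann_bc_inverse /hybrid_bc_inverse
  /left_bc_inverse /left_ann_bc_inverse /subsetR /eqsetR
  /rmulset /lmulset /rann /lann.
split; split.
- move=> [[Hsub Hcay] [Hann Hyab]].
  have [r Hr] : exists r, y = b * r by apply: Hsub; exists 1; rewrite mulr1.
  have Hyay : y * a * y = y by rewrite {2}Hr mulrA Hyab -Hr.
  split; first exact: Hyay.
  split=> t; split.
  + by move=> [s ->]; apply: Hsub; exists s.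
  + move=> [s ->]; exists (a * b * s); by rewrite !mulrA Hyab.
  + move=> Ht; by rewrite -Hcay -mulrA Ht mulr0.
  + exact: Hann.
- move=> [Hyay [Hs Ha]].
  split; split.
  + by move=> t [s ->]; apply/Hs; exists s.
  + have : y * (a * y - 1) = 0 by rewrite mulrBr mulr1 mulrA Hyay subrr.
    move/Ha => H; apply/eqP; rewrite -subr_eq0; apply/eqP.
    by rewrite -mulrA -[X in _ - X]mulr1 -mulrBr.
  + by move=> t /Ha.
  + have [s Hb] : exists s, b = y * s by apply/Hs; exists 1; rewrite mulr1.
    by rewrite Hb !mulrA Hyay.
- move=> [[Hsub Hyab] [Hann Hcay]].
  have [r Hr] : exists r, y = r * c by apply: Hsub; exists 1; rewrite mul1r.
  have Hyay : y * a * y = y by rewrite {1}Hr -!mulrA (mulrA c) Hcay -Hr.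
  split; first exact: Hyay.
  split=> t; split.
  + exact: Hann.
  + move=> Ht; by rewrite -Hyab !mulrA Ht !mul0r.
  + move=> [s ->]; exists (s * c * a); by rewrite -!mulrA (mulrA c) Hcay.
  + by move=> [s ->]; apply: Hsub; exists s.
- move=> [Hyay [Ha Hs]].
  split; split.
  + by move=> t [s ->]; apply/Hs; exists s.
  + have : (y * a - 1) * y = 0 by rewrite mulrBl mul1r Hyay subrr.
    move/Ha => H; apply/eqP; rewrite -subr_eq0; apply/eqP.
    by rewrite -[X in _ - X]mul1r -mulrBl.
  + by move=> t /Ha.
  + have [s Hc] : exists s, c = s * y by apply/Hs; exists 1; rewrite mul1r.
    by rewrite Hc -!mulrA (mulrA y) Hyay.
Qed.
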